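(* Let $\mathcal{J}$ be a finite set, $\mathcal{J}_0=\mathcal{J}\cup\{0\}$, $(\Omega,P)$ a Borel probability space and $\mathcal{U}:\Omega\times\mathcal{J}_0\times\mathbb{R}\to\mathbb{R}$ satisfying the regularity and no-indifference assumptions in the context. Assume moreover: (i) for each $\varepsilon\in\Omega$ and $j\in\mathcal{J}$ the map $\delta\mapsto\mathcal{U}_{\varepsilon j}(\delta)$ is invertible; (ii) the random vector $Z_0\in\mathbb{R}^{\mathcal{J}}$ with components $Z_{0j}=\mathcal{U}_{\varepsilon j}^{-1}(\mathcal{U}_{\varepsilon 0}(0))$, $\varepsilon\sim P$, has a non-vanishing density on $\mathbb{R}^{\mathcal{J}}$. Then $\tilde\sigma^{-1}(s)$ has a single element for every $s\in\mathbb{R}^{\mathcal{J}_0}$ with $s_j>0$ for all $j$ and $\sum_j s_j=1$.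
   Context: Regularity: for every $j\in\mathcal{J}_0$ and $\delta\in\mathbb{R}$, $\varepsilon\mapsto\mathcal{U}_{\varepsilon j}(\delta)$ is measurable, and for every $\varepsilon$, $j$, $\delta\mapsto\mathcal{U}_{\varepsilon j}(\delta)$ is increasing and continuous. No indifference: for all distinct $j,j'\in\mathcal{J}_0$ and all $\delta,\delta'$, $P(\mathcal{U}_{\varepsilon j}(\delta)=\mathcal{U}_{\varepsilon j'}(\delta'))=0$. For $\delta\in\mathbb{R}^{\mathcal{J}_0}$, $\sigma_j(\delta)=P(\varepsilon:\mathcal{U}_{\varepsilon j}(\delta_j)\ge\max_{j'\in\mathcal{J}_0}\mathcal{U}_{\varepsilon j'}(\delta_{j'}))$. For $\delta\in\mathbb{R}^{\mathcal{J}}$, $\tilde\sigma(\delta)=\sigma((0,\delta))$ (normalization $\delta_0=0$), and $\tilde\sigma^{-1}(s)=\{\delta\in\mathbb{R}^{\mathcal{J}}:\tilde\sigma(\delta)=s\}$. *)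

(* Defs.v *)
From HB Require Import structures.
From mathcomp Require Import all_boot all_order all_algebra.
From mathcomp Require Import all_classical all_reals all_analysis.
Set Implicit Arguments. Unset Strict Implicit. Unset Printing Implicit Defensive.
Import Order.TTheory GRing.Theory Num.Theory.
Local Open Scope classical_set_scope.
Local Open Scope ring_scope.

(* Index conventions: J = 'I_n, J0 = option 'I_n, with None playing the role
   of the outside option 0. *)

(* Iterated Lebesgue integral on R^n (n-tuples), i.e. integration of a
   function g : R^n -> \bar R against n-dimensional Lebesgue measure,
   written as iterated one-dimensional Lebesgue integrals (Tonelli). *)
Fixpoint lebesgue_tuple_integral (R : realType) (n : nat) :
    (n.-tuple R -> \bar R) -> \bar R :=
  match n return (n.-tuple R -> \bar R) -> \bar R with
  | 0 => fun g => g [tuple]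
  | m.+1 => fun g =>
      (\int[@lebesgue_measure R]_(x in [set: R])
          lebesgue_tuple_integral (fun t : m.-tuple R => g (cons_tuple x t)))%E
  end.

Definition sigma (R : realType) (d : measure_display) (Omega : measurableType d)
    (P : probability Omega R) (n : nat) (U : Omega -> option 'I_n -> R -> R)
    (delta : option 'I_n -> R) (j : option 'I_n) : \bar R :=
  P [set e | forall j' : option 'I_n, U e j' (delta j') <= U e j (delta j)].

Definition extend0 (R : realType) (n : nat) (delta : 'I_n -> R) : option 'I_n -> R :=
  fun k => match k with None => 0 | Some j => delta j end.

Definition sigma_tilde (R : realType) (d : measure_display) (Omega : measurableType d)
    (P : probability Omega R) (n : nat) (U : Omega -> option 'I_n -> R -> R)
    (delta : 'I_n -> R) : option 'I_n -> \bar R :=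
  sigma P U (extend0 delta).

Definition sigma_tilde_inv (R : realType) (d : measure_display) (Omega : measurableType d)
    (P : probability Omega R) (n : nat) (U : Omega -> option 'I_n -> R -> R)
    (s : option 'I_n -> R) : set ('I_n -> R) :=
  [set delta | forall k, sigma_tilde P U delta k = (s k)%:E].

(* Main.v *)
Require Import Defs.
From HB Require Import structures.
From mathcomp Require Import all_boot all_order all_algebra.
From mathcomp Require Import all_classical all_reals all_analysis.
From mathcomp Require Import measurable_realfun.
Import Order.TTheory GRing.Theory Num.Theory numFieldNormedType.Exports.
Local Open Scope classical_set_scope.
Local Open Scope ring_scope.

Module Aux.
Set Implicit Arguments. Unset Strict Implicit. Unset Printing Implicit Defensive.
Section TupleInt.
Variable R : realType.

Lemma cons_meas (m : nat) :
  measurable_fun [set: R * m.-tuple R] (fun p => cons_tuple p.1 p.2).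
Proof.
apply/measurable_fun_tnthP => -[[|i] Hi] /=.
- rewrite (_ : _ \o _ = fst); first exact: measurable_fst.
  apply/funext => p /=; by rewrite (tnth_nth 0).
- have Hi' : (i < m)%N by [].
  rewrite (_ : _ \o _ = (fun t : m.-tuple R => tnth t (Ordinal Hi')) \o snd).
    apply: measurableT_comp; [exact: measurable_tnth | exact: measurable_snd].
  apply/funext => p /=; by rewrite (tnth_nth 0) /= (tnth_nth 0).
Qed.

Lemma I_ge0 (m : nat) (g : m.-tuple R -> \bar R) :
  (forall t, (0 <= g t)%E) -> (0 <= lebesgue_tuple_integral g)%E.
Proof.
elim: m g => [|m IH] g g0 /=; first exact: g0.
apply: integral_ge0 => x _; apply: IH => t; exact: g0.
Qed.

Lemma meas_I (m : nat) : forall (d' : measure_display) (T : measurableType d')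
  (g : T * m.-tuple R -> \bar R),
  measurable_fun [set: T * m.-tuple R] g -> (forall p, (0 <= g p)%E) ->
  measurable_fun setT (fun x => lebesgue_tuple_integral (fun t => g (x, t))).
Proof.
elim: m => [|m IH] d' T g mg g0 /=.
  exact: (measurable_fun_pair1 [tuple] mg).
pose g' := fun q : (T * R) * m.-tuple R => g (q.1.1, cons_tuple q.1.2 q.2).
have mg' : measurable_fun setT g'.
  apply: measurableT_comp mg _.
  apply: measurable_fun_pair.
    apply: measurableT_comp; [exact: measurable_fst | exact: measurable_fst].
  have h := measurableT_comp (@cons_meas m) (measurable_fun_pair
    (measurableT_comp (@measurable_snd _ _ T R) (@measurable_fst _ _ (T * R)%type (m.-tuple R)))
    (@measurable_snd _ _ (T * R)%type (m.-tuple R))).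
  exact: h.
have := IH _ _ g' mg' (fun q => g0 _).
move=> mF.
have := measurable_fun_fubini_tonelli_F (m2 := @lebesgue_measure R) _ mF
  (fun p => I_ge0 (fun t => g0 _)).
rewrite /fubini_F /=.
move=> H.
exact: H.
Qed.


Lemma pos_I (m : nat) : forall (g : m.-tuple R -> \bar R) (a b : m.-tuple R),
  measurable_fun [set: m.-tuple R] g -> (forall t, (0 <= g t)%E) ->
  (forall i : 'I_m, nth 0 a i < nth 0 b i) ->
  (forall t : m.-tuple R, (forall i : 'I_m, nth 0 a i <= nth 0 t i < nth 0 b i) -> (0 < g t)%E) ->
  (0 < lebesgue_tuple_integral g)%E.
Proof.
elim: m => [|m IH] g a b mg g0 ab gpos /=.
  by apply: gpos => -[].
set G := fun y => lebesgue_tuple_integral (fun t => g (cons_tuple y t)).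
have mG : measurable_fun [set: R] G.
  exact: (meas_I (g := fun p : R * m.-tuple R => g (cons_tuple p.1 p.2))
     (measurableT_comp mg (@cons_meas m)) (fun p => g0 _)).
have G0 : forall y, (0 <= G y)%E by move=> y; apply: I_ge0.
have Gpos : forall y, nth 0 a 0 <= y < nth 0 b 0 -> (0 < G y)%E.
  move=> y hy; apply: (IH _ [tuple of behead a] [tuple of behead b]).
  - exact: (measurableT_comp mg (measurable_fun_pair2 y (@cons_meas m))).
  - by move=> t; apply: g0.
  - move=> i /=; rewrite !nth_behead.
    have Hi : (i.+1 < m.+1)%N by rewrite ltnS.
    exact: (ab (Ordinal Hi)).
  - move=> t ht; apply: gpos => -[[|i] Hi] //=.
    have Hi' : (i < m)%N by [].
    have := ht (Ordinal Hi'); by rewrite /= !nth_behead.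
rewrite lt_neqAle integral_ge0 ?andbT; last by move=> y _; apply: G0.
apply/negP => /eqP H0.
have Habs : (\int[@lebesgue_measure R]_(x in [set: R]) `|G x| = 0)%E.
  rewrite H0; apply: eq_integral => y _; by rewrite gee0_abs.
have [N [mN N0 sN]] := (ae_eq_integral_abs (@lebesgue_measure R) measurableT mG).1 Habs.
have sub : [set` `[nth 0 a 0, nth 0 b 0[%R] `<=` N.
  move=> y /= hy; apply: sN => /= /(_ I) Gy0.
  have := Gpos y; rewrite in_itv /= in hy; rewrite hy Gy0 /= => /(_ isT).
  by rewrite ltxx.
have := le_measure (@lebesgue_measure R) (mem_set (measurable_itv _)) (mem_set mN) sub.
move: N0 => /= ->.
have ab0 := ab ord0; rewrite /= in ab0.
rewrite lebesgue_measure_itv /= lte_fin ab0.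
by rewrite lee_fin subr_le0 leNgt ab0.
Qed.

End TupleInt.

Section Main.
Variables (R : realType) (d : measure_display) (Omega : measurableType d)
  (P : probability Omega R) (n : nat) (U : Omega -> option 'I_n -> R -> R).
Hypothesis Umeas : forall (j : option 'I_n) (delta : R),
      measurable_fun [set: Omega] (fun e => U e j delta).
Hypothesis Uincr : forall e j, {homo U e j : x y / x < y}.
Hypothesis Ucont : forall e j, continuous (U e j).
Hypothesis Unoind : forall (j j' : option 'I_n), j <> j' -> forall delta delta' : R,
      P [set e | U e j delta = U e j' delta'] = 0%E.

Local Notation J0 := (option 'I_n).

Definition C (x : J0 -> R) (k : J0) : set Omega :=
  [set e | forall j', U e j' (x j') <= U e k (x k)].

Lemma Ule e j : {mono U e j : x y / x <= y}.
Proof. exact: le_mono (Uincr e j). Qed.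
Lemma Ult e j : {mono U e j : x y / x < y}.
Proof. exact: leW_mono (Ule e j). Qed.

Lemma meas_le (f g : Omega -> R) : measurable_fun setT f -> measurable_fun setT g ->
  measurable [set e | f e <= g e].
Proof.
move=> mf mg; have := measurable_fun_ler mf mg measurableT (Y := [set true]) ltac:(done).
by rewrite setTI.
Qed.

Lemma measC x k : measurable (C x k).
Proof.
have -> : C x k = \big[setI/setT]_(j <- index_enum J0) [set e | U e j (x j) <= U e k (x k)].
  rewrite -bigcap_seq; apply/seteqP; split => e /= He j.
    by move=> _; apply: He.
  by apply: He; rewrite /= mem_index_enum.
apply: bigsetI_measurable => j _; exact: meas_le.
Qed.

Lemma measE (j k : J0) a b : measurable [set e | U e j a = U e k b].
Proof.
have -> : [set e | U e j a = U e k b] = [set e | U e j a <= U e k b] `&` [set e | U e k b <= U e j a].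
  apply/seteqP; split => e /=; first by move=> ->; rewrite lexx.
  by move=> [h1 h2]; apply/eqP; rewrite eq_le h1 h2.
apply: measurableI; exact: meas_le.
Qed.

Lemma PC_fin x k : P (C x k) = (fine (P (C x k)))%:E.
Proof. by rewrite fineK // fin_num_measure //; apply: measC. Qed.


Lemma tie_null x (j k : J0) : j <> k -> P (C x j `&` C x k) = 0%E.
Proof.
move=> jk; apply/eqP; rewrite eq_le measure_ge0 andbT -(Unoind jk (x j) (x k)).
apply: le_measure; rewrite ?inE; [exact: measurableI (measC _ _) (measC _ _)|exact: measE|].
move=> e [/= h1 h2]; apply/eqP; rewrite eq_le; by rewrite h2 h1.
Qed.

Lemma capU_null x a r : a \notin r ->
  P ((\big[setU/set0]_(k <- r) C x k) `&` C x a) = 0%E.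
Proof.
elim: r => [|l r IH]; first by rewrite big_nil set0I measure0.
rewrite inE negb_or => /andP[al ar].
rewrite big_cons setIUl; apply/eqP; rewrite eq_le measure_ge0 andbT.
have la : l <> a by move=> la; move: al; rewrite la eqxx.
set B := \big[setU/set0]_(j <- r) C x j.
have H : (P (C x l `&` C x a `|` (B `&` C x a)) <= P (C x l `&` C x a) + P (B `&` C x a))%E.
  exact: (measureU2 P (measurableI _ _ (measC x l) (measC x a))
  (measurableI _ _ (bigsetU_measurable r (fun k (_ : true) => measC x k)) (measC x a))).
by rewrite (tie_null x la) (IH ar) adde0 in H.
Qed.

Lemma sumU x r : uniq r ->
  P (\big[setU/set0]_(k <- r) C x k) = (\sum_(k <- r) P (C x k))%E.
Proof.
elim: r => [|a r IH]; first by rewrite !big_nil measure0.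
move=> /= /andP[ar ur]; rewrite !big_cons -IH //.
set B := \big[setU/set0]_(k <- r) C x k.
have mB : measurable B by apply: bigsetU_measurable => k _; exact: measC.
have -> : C x a `|` B = C x a `|` (B `\` C x a).
  apply/seteqP; split => e /=.
    by case=> [h|h]; [left|case: (pselect (C x a e)) => h'; [left|right]].
  by case=> [h|[h _]]; [left|right].
have dis : C x a `&` (B `\` C x a) = set0.
  by apply/seteqP; split => e //= [h [_ h']].
have H : P (C x a `|` (B `\` C x a)) = (P (C x a) + P (B `\` C x a))%E.
  exact: (measureU P (measC x a) (measurableD mB (measC x a)) dis).
rewrite H; congr (_ + _)%E.
have H2 : P B = (P (B `\` C x a) + P (B `&` C x a))%E := measureDI P mB (measC x a).
by rewrite H2 capU_null // adde0.
Qed.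

Lemma argmax x e : exists a, forall k, U e k (x k) <= U e a (x a).
Proof.
case: (@arg_maxP _ _ J0 None xpredT (fun k => U e k (x k)) isT) => a _ H.
by exists a => k; apply: H.
Qed.

Lemma sum1 x : (\sum_(k <- index_enum J0) P (C x k))%E = 1%E.
Proof.
rewrite -sumU ?index_enum_uniq //.
have -> : \big[setU/set0]_(k <- index_enum J0) C x k = setT.
  rewrite -bigcup_seq; apply/seteqP; split => e // _.
  have [a Ha] := argmax x e; exists a => //=; exact: mem_index_enum.
exact: probability_setT.
Qed.

Definition p x k := fine (P (C x k)).

Lemma sum1R x : \sum_(k <- index_enum J0) p x k = 1.
Proof.
have := sum1 x; rewrite (eq_bigr _ (fun k _ => PC_fin x k)) sumEFin.
by move=> [].
Qed.

Lemma p_ge0 x k : 0 <= p x k.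
Proof. by rewrite /p fine_ge0 // measure_ge0. Qed.


Lemma dec_small (A : nat -> set Omega) (N : set Omega) :
  (forall m, measurable (A m)) -> (forall m, A m.+1 `<=` A m) ->
  \bigcap_m A m `<=` N -> measurable N -> P N = 0%E ->
  forall eps : R, 0 < eps -> exists m, (P (A m) < eps%:E)%E.
Proof.
move=> mA dA sN mN N0 eps e0.
have homo : {homo A : i j / (i <= j)%N >-> (j <= i)%O}.
  move=> i j /subnK <-; elim: (j - i)%N => [|k IH] /=; first by apply/subsetPset.
  rewrite addSn; apply/subsetPset; apply: subset_trans (dA _) _; exact/subsetPset.
have P0 : P (\bigcap_m A m) = 0%E.
  apply/eqP; rewrite eq_le measure_ge0 andbT -N0.
  by apply: le_measure => //; rewrite inE //; apply: bigcapT_measurable.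
have cv : (fun m => P (A m)) @ \oo --> 0%E.
  rewrite -P0; exact: (nonincreasing_cvg_mu (mu := P) (F := A)
  (le_lt_trans (probability_le1 P (mA 0%N)) (ltry 1)) mA (bigcapT_measurable mA) homo).
have [_ cvr] := (fine_cvgP _ _).1 cv.
have [M _ HM] := cvgr_lt _ cvr _ e0.
exists M; rewrite -(@fineK _ (P (A M))); last by rewrite fin_num_measure.
by rewrite lte_fin; apply: (HM M (leqnn M)).
Qed.


Lemma contL e j y c : c < U e j y ->
  exists M, forall m, (M <= m)%N -> c < U e j (y - (m.+1%:R)^-1).
Proof.
move=> cy.
have hv : (fun m : nat => y - (m.+1%:R)^-1) @ \oo --> y.
  rewrite -[X in _ --> X]subr0; apply: cvgB; first exact: cvg_cst.
  exact: (@cvg_harmonic R).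
have hU : (fun m : nat => U e j (y - (m.+1%:R)^-1)) @ \oo --> U e j y.
  have := continuous_cvg _ (@Ucont e j y) hv. exact.
have [M _ HM] := cvgr_gt _ hU _ cy.
by exists M => m Mm; apply: HM.
Qed.

Lemma contR e j y c : U e j y < c ->
  exists m, U e j (y + (m.+1%:R)^-1) < c.
Proof.
move=> cy.
have hv : (fun m : nat => y + (m.+1%:R)^-1) @ \oo --> y.
  rewrite -[X in _ --> X]addr0; apply: cvgD; first exact: cvg_cst.
  exact: (@cvg_harmonic R).
have hU : (fun m : nat => U e j (y + (m.+1%:R)^-1)) @ \oo --> U e j y.
  have := continuous_cvg _ (@Ucont e j y) hv. exact.
have [M _ HM] := cvgr_lt _ hU _ cy.
by exists M; apply: (HM M (leqnn M)).
Qed.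


Lemma big_opt (T : Type) (idx : T) (op : Monoid.com_law idx) (F : J0 -> T) :
  \big[op/idx]_(k : J0) F k = op (F None) (\big[op/idx]_(j : 'I_n) F (Some j)).
Proof.
rewrite (bigD1 None) //=; congr (op _ _).
rewrite (reindex_omap (Some : 'I_n -> J0) id) //=; last by case.
by apply: eq_bigl => j; rewrite eqxx.
Qed.

Lemma C_mono x y k : x k <= y k -> (forall j, j != k -> y j <= x j) ->
  C x k `<=` C y k.
Proof.
move=> hk hj e He j'; case: (eqVneq j' k) => [->|jk]; first exact: lexx.
apply: (@le_trans _ _ (U e j' (x j'))); first by rewrite Ule; exact: hj.
apply: le_trans (He j') _; by rewrite Ule.
Qed.

Lemma nullU (r : seq J0) (Pr : pred J0) (F : J0 -> set Omega) :
  (forall k, Pr k -> measurable (F k)) -> (forall k, Pr k -> P (F k) = 0%E) ->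
  P (\big[setU/set0]_(k <- r | Pr k) F k) = 0%E.
Proof.
move=> mF F0; elim: r => [|a r IH]; first by rewrite big_nil measure0.
rewrite big_cons; case: ifP => Pa //.
set B := \big[setU/set0]_(j <- r | Pr j) F j.
have H : (P (F a `|` B) <= P (F a) + P B)%E.
  exact: (measureU2 P (mF a Pa) (bigsetU_measurable r mF)).
rewrite (F0 a Pa) IH adde0 in H.
by apply/eqP; rewrite eq_le H measure_ge0.
Qed.

Definition upd (delta : 'I_n -> R) (j : 'I_n) (v : R) : 'I_n -> R :=
  fun i => if i == j then v else delta i.

Lemma PCle x k (v : R) A : measurable A -> C x k `<=` A -> (P A <= v%:E)%E -> p x k <= v.
Proof.
move=> mA sub hA; rewrite -lee_fin -PC_fin; apply: le_trans hA.
by apply: le_measure => //; rewrite inE //; exact: measC.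
Qed.


Lemma inv_dec (m : nat) : (m.+2%:R)^-1 <= (m.+1%:R)^-1 :> R.
Proof. by rewrite lef_pV2 ?posrE ?ltr0Sn // ler_nat. Qed.

Lemma inv_gt0 (m : nat) : 0 < (m.+1%:R)^-1 :> R.
Proof. by rewrite invr_gt0 ltr0Sn. Qed.

Lemma ext_same delta j v : extend0 (upd delta j v) (Some j) = v.
Proof. by rewrite /= /upd eqxx. Qed.

Lemma ext_other delta j v k : k != Some j -> extend0 (upd delta j v) k = extend0 delta k.
Proof.
case: k => [i|] //= ij; rewrite /upd; case: eqP => // eij.
by move: ij; rewrite eij eqxx.
Qed.

Hypothesis Uinv : forall e (j : 'I_n), bijective (U e (Some j)).

Lemma unb_below e j c : exists m : nat, U e (Some j) (- m%:R) < c.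
Proof.
have [g fK gK] := Uinv e j.
set z := g (c - 1).
exists (Num.Def.archi_bound `|z|).
have hb := archi_boundP (normr_ge0 z).
apply: (@lt_le_trans _ _ (U e (Some j) z)); last by rewrite /z gK lerBlDr lerDl ler01.
rewrite Ult ltrNl; apply: le_lt_trans hb; by rewrite ler_normr lexx orbT.
Qed.

Lemma unb_above e j c : exists m : nat, c < U e (Some j) (m%:R).
Proof.
have [g fK gK] := Uinv e j.
set z := g (c + 1).
exists (Num.Def.archi_bound `|z|).
have hb := archi_boundP (normr_ge0 z).
apply: (@le_lt_trans _ _ (U e (Some j) z)); first by rewrite /z gK lerDl ler01.
rewrite Ult; apply: le_lt_trans hb; exact: ler_norm.
Qed.

Variable s : J0 -> R.
Hypothesis hs : forall k, 0 < s k.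
Hypothesis hsum : \sum_(k : J0) s k = 1.

Lemma S_nonempty : exists delta : 'I_n -> R,
  forall j, p (extend0 delta) (Some j) <= s (Some j).
Proof.
have H : forall j : 'I_n, exists m : nat,
    (P [set e | (U e None 0 <= U e (Some j) (- m%:R))%R] < (s (Some j))%:E)%E.
  move=> j; apply: (dec_small (N := set0)) => //.
  - move=> m; apply: meas_le; exact: Umeas.
  - move=> m e /= h; apply: le_trans h _; rewrite Ule lerN2 ler_nat; exact: leqnSn.
  - move=> e /= h; have [m hm] := unb_below e j (U e None 0).
    by have := h m I; rewrite /= leNgt hm.
have [mf hmf] := choice H.
exists (fun j => - (mf j)%:R) => j.
apply: (PCle (meas_le (Umeas _ _) (Umeas _ _))) _ (ltW (hmf j)).
move=> e He; exact: (He None).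
Qed.

Lemma S_bounded j : exists b : R, forall delta : 'I_n -> R,
  (forall i, p (extend0 delta) (Some i) <= s (Some i)) -> delta j <= b.
Proof.
have [m hm] : exists m : nat,
    (P [set e | (U e (Some j) m%:R <= U e None 0)%R] < (s None)%:E)%E.
  apply: (dec_small (N := set0)) => //.
  - move=> m; apply: meas_le; exact: Umeas.
  - move=> m e /= h; apply: le_trans h; rewrite Ule ler_nat; exact: leqnSn.
  - move=> e /= h; have [m hm] := unb_above e j (U e None 0).
    by have := h m I; rewrite /= leNgt hm.
exists m%:R => delta hd.
rewrite leNgt; apply/negP => lt.
set A := [set e | U e (Some j) m%:R <= U e None 0].
have mA : measurable A by apply: meas_le; exact: Umeas.
have h1 : p (extend0 delta) None <= fine (P A).
  apply: (PCle mA); last by rewrite fineK // fin_num_measure.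
  move=> e He; have := He (Some j); rewrite /A /=; apply: le_trans.
  by rewrite Ule ltW.
have h2 : fine (P A) < s None.
  by rewrite -lte_fin fineK // fin_num_measure.
have h3 := sum1R (extend0 delta); rewrite big_opt in h3.
have h4 := hsum; rewrite big_opt in h4.
have h5 : \sum_(i : 'I_n) p (extend0 delta) (Some i) <= \sum_(i : 'I_n) s (Some i).
  by apply: ler_sum => i _; exact: hd.
have : s None <= p (extend0 delta) None.
  by rewrite -(lerD2r (\sum_(i : 'I_n) p (extend0 delta) (Some i))) h3 -h4 lerD2l.
by rewrite leNgt (le_lt_trans h1 h2).
Qed.


Lemma PC_le x k v : p x k <= v -> (P (C x k) <= v%:E)%E.
Proof. by move=> h; rewrite PC_fin lee_fin. Qed.

Lemma PCU x k A B (v w : R) : measurable A -> measurable B ->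
  C x k `<=` A `|` B -> (P A <= v%:E)%E -> (P B <= w%:E)%E -> p x k <= v + w.
Proof.
move=> mA mB sub hA hB.
apply: (PCle (measurableU _ _ mA mB) sub).
have H : (P (A `|` B) <= P A + P B)%E := measureU2 P mA mB.
apply: le_trans H _; rewrite EFinD; exact: leeD.
Qed.

Lemma exist_sol : exists delta : 'I_n -> R, forall k, p (extend0 delta) k = s k.
Proof.
pose S := [set delta : 'I_n -> R | forall i, p (extend0 delta) (Some i) <= s (Some i)].
have [d0 Sd0] := S_nonempty.
have [bf hbf] := choice (fun j => S_bounded j).
pose E j := [set delta j | delta in S].
have hsE : forall j, has_sup (E j).
  move=> j; split; first by exists (d0 j), d0.
  exists (bf j) => _ [delta Sd <-]; exact: hbf.
pose ds := fun j => sup (E j).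
have ub : forall delta, S delta -> forall j, delta j <= ds j.
  move=> delta Sd j; apply: (sup_upper_bound (hsE j)); by exists delta.
set xs := extend0 ds.
have Sds : S ds.
  move=> j.
  apply/ler_addgt0Pr => eps e0.
  pose y m := ds j - (m.+1%:R)^-1.
  pose D m := C xs (Some j) `\` C (extend0 (upd ds j (y m))) (Some j).
  have Cinc : forall m, C (extend0 (upd ds j (y m))) (Some j) `<=`
                        C (extend0 (upd ds j (y m.+1))) (Some j).
    move=> m; apply: C_mono; first by rewrite !ext_same lerD2l lerN2 inv_dec.
    by move=> k kj; rewrite !ext_other.
  have mD : forall m, measurable (D m) by move=> m; apply: measurableD; exact: measC.
  have Ddec : forall m, D m.+1 `<=` D m.
    by move=> m e [h1 h2]; split => // h3; apply: h2; exact: Cinc m _ h3.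
  pose Tie := \big[setU/set0]_(k <- index_enum J0 | k != Some j)
                [set e | U e k (xs k) = U e (Some j) (xs (Some j))].
  have mTie : measurable Tie by apply: bigsetU_measurable => k _; exact: measE.
  have Tie0 : P Tie = 0%E.
    apply: nullU => k kj; first exact: measE.
    by apply: Unoind => /eqP; rewrite (negbTE kj).
  have sub : \bigcap_m D m `<=` Tie.
    move=> e He; apply: contrapT => nT.
    have [h0 _] := He 0%N I.
    have Hk : forall k, exists M, k != Some j -> forall m, (M <= m)%N ->
        U e k (xs k) < U e (Some j) (y m).
      move=> k; case: (eqVneq k (Some j)) => [->|kj]; first by exists 0%N.
      have lt : U e k (xs k) < U e (Some j) (ds j).
        rewrite lt_neqAle (h0 k) andbT; apply/eqP => eqk; apply: nT.
        rewrite /Tie -bigcup_seq_cond; exists k => //.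
        by rewrite /= mem_index_enum kj.
      have [M hM] := contL lt.
      by exists M => _ m hm; exact: hM.
    have [Mf hMf] := choice Hk.
    have [_ h2] := He (\max_(k : J0) Mf k) I; apply: h2 => k.
    rewrite ext_same; case: (eqVneq k (Some j)) => [->|kj]; first by rewrite ext_same.
    rewrite ext_other //; apply: ltW; apply: hMf => //; exact: leq_bigmax.
  have [m hm] := dec_small mD Ddec sub mTie Tie0 e0.
  have [_ [delta Sdelta <-] hlt] := sup_adherent (inv_gt0 m) (hsE j).
  apply: (PCU (measC (extend0 delta) (Some j)) (mD m)).
  - move=> e He; case: (pselect (C (extend0 (upd ds j (y m))) (Some j) e)) => h;
      last by right; split.
    left; apply: C_mono _ _ _ h; first by rewrite ext_same /=; exact: ltW.
    move=> k kj; rewrite ext_other //; case: k kj => [i|] //= _; exact: ub.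
  - by apply: PC_le; exact: Sdelta.
  - exact: ltW.
have eqj : forall j, p xs (Some j) = s (Some j).
  move=> j; apply/eqP; rewrite eq_le Sds /= leNgt; apply/negP => lt.
  set gap := s (Some j) - p xs (Some j).
  have gap0 : 0 < gap by rewrite subr_gt0.
  pose y m := ds j + (m.+1%:R)^-1.
  pose xm m := extend0 (upd ds j (y m)).
  pose A m := C (xm m) (Some j) `\` C xs (Some j).
  have mA : forall m, measurable (A m) by move=> m; apply: measurableD; exact: measC.
  have Adec : forall m, A m.+1 `<=` A m.
    move=> m e [h1 h2]; split => //; move: h1; apply: C_mono.
      by rewrite /xm !ext_same lerD2l inv_dec.
    by move=> k kj; rewrite /xm !ext_other.
  have sub : \bigcap_m A m `<=` set0.
    move=> e He; have [_ h2] := He 0%N I.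
    have [k hk] := (existsNP _).2 h2.
    have lt2 : U e (Some j) (xs (Some j)) < U e k (xs k) by rewrite ltNge; apply/negP.
    have [m hm] := contR lt2.
    have [h3 _] := He m I.
    have kj : k != Some j.
      by apply/eqP => kj; move: lt2; rewrite kj ltxx.
    have := h3 k; rewrite /xm ext_same ext_other //.
    by rewrite leNgt hm.
  have [m hm] := dec_small mA Adec sub measurable0 (measure0 P) gap0.
  have Sm : S (upd ds j (y m)).
    move=> i; case: (eqVneq i j) => [->|ij].
      have := PCU (measC xs (Some j)) (mA m) (x := xm m) (k := Some j) (v := p xs (Some j)) _ _ (ltW hm).
      rewrite /gap addrC subrK; apply.
      + move=> e He; case: (pselect (C xs (Some j) e)) => h; [left|right] => //.
      + exact: PC_le.
    apply: le_trans (Sds i).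
    apply: (PCle (measC xs (Some i))); last exact: PC_le.
    apply: C_mono; first by rewrite ext_other // inE; apply: contra ij => /eqP [->].
    move=> k ki; case: (eqVneq k (Some j)) => [->|kj].
      by rewrite ext_same /= lerDl ltW // inv_gt0.
    by rewrite ext_other.
  by have := ub _ Sm j; rewrite /upd eqxx /y gerDl leNgt inv_gt0.
exists ds => -[j|]; first exact: eqj.
have h1 := sum1R xs; rewrite big_opt in h1.
have h2 := hsum; rewrite big_opt in h2.
rewrite (eq_bigr _ (fun j _ => eqj j)) in h1.
by apply: (addIr (\sum_(j : 'I_n) s (Some j))); rewrite h1 h2.
Qed.


Variable Z0 : Omega -> n.-tuple R.
Hypothesis HZ0 : forall e (j : 'I_n), U e (Some j) (tnth (Z0 e) j) = U e None 0.
Variable f : n.-tuple R -> R.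
Hypothesis fmeas : measurable_fun [set: n.-tuple R] f.
Hypothesis fpos : forall z, 0 < f z.
Hypothesis fdens : forall A : set (n.-tuple R), measurable A ->
      P (Z0 @^-1` A) = lebesgue_tuple_integral (fun z => ((f z)%:E * (\1_A z)%:E)%E).

Lemma uniq_aux (delta delta' : 'I_n -> R) (k0 : 'I_n) :
  (forall k, P (C (extend0 delta) k) = P (C (extend0 delta') k)) ->
  delta k0 < delta' k0 -> False.
Proof.
move=> heq hlt.
set x := extend0 delta; set x' := extend0 delta'.
set r := [seq l <- index_enum J0 | x' l <= x l].
have ur : uniq r by apply: filter_uniq; exact: index_enum_uniq.
set CL := \big[setU/set0]_(l <- r) C x l.
set CL' := \big[setU/set0]_(l <- r) C x' l.
have mCL : measurable CL by apply: bigsetU_measurable => l _; exact: measC.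
have mCL' : measurable CL' by apply: bigsetU_measurable => l _; exact: measC.
have eqCL : P CL = P CL'.
  rewrite /CL /CL' !sumU //; apply: eq_bigr => l _; exact: heq.
pose a := [tuple delta i | i < n].
pose b := [tuple (if i == k0 then delta' k0 else delta i + 1) | i < n].
pose box := [set z : n.-tuple R | forall i : 'I_n, tnth a i <= tnth z i < tnth b i].
pose Ev := [set e | forall i : 'I_n,
  U e (Some i) (tnth a i) <= U e None 0 < U e (Some i) (tnth b i)].
have Ev_eq : Z0 @^-1` box = Ev.
  apply/seteqP; split => e /= h i; have /andP[h1 h2] := h i.
    by rewrite -(HZ0 e i) Ule Ult h1 h2.
  by rewrite -(Ule e (Some i)) -(Ult e (Some i)) HZ0 h1 h2.
have mEv : measurable Ev.
  have -> : Ev = \big[setI/setT]_(i <- index_enum 'I_n)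
      ([set e | U e (Some i) (tnth a i) <= U e None 0] `&`
       ~` [set e | U e (Some i) (tnth b i) <= U e None 0]).
    rewrite -bigcap_seq; apply/seteqP; split => e /= He i.
      move=> _; have /andP[h1 h2] := He i; split => //.
      by apply/negP; rewrite -ltNge.
    have [h1 /negP h2] := He i (mem_index_enum i).
    by rewrite h1 ltNge h2.
  apply: bigsetI_measurable => i _; apply: measurableI; first exact: meas_le.
  by apply: measurableC; exact: meas_le.
have mbox : measurable box.
  have -> : box = \big[setI/setT]_(i <- index_enum 'I_n)
      ((fun z : n.-tuple R => tnth z i) @^-1` `[tnth a i, tnth b i[).
    rewrite -bigcap_seq; apply/seteqP; split => z /= Hz i.
      by move=> _; rewrite /= in_itv /=; exact: Hz.
    by have := Hz i (mem_index_enum i); rewrite /= in_itv.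
  apply: bigsetI_measurable => i _.
  by rewrite -[X in measurable X]setTI; apply: measurable_tnth => //; exact: measurable_itv.
have PEv : (0 < P Ev)%E.
  rewrite -Ev_eq fdens //; apply: (pos_I (a := a) (b := b)).
  - apply: emeasurable_funM; apply/measurable_EFinP => //.
  - move=> t; apply: mule_ge0; rewrite lee_fin; first exact: ltW.
    by rewrite indicE ler0n.
  - move=> i; rewrite -!(tnth_nth 0) !tnth_mktuple.
    by case: eqP => [->|_]; [exact: hlt | rewrite ltrDl ltr01].
  - move=> t ht; apply: mule_gt0; rewrite lte_fin //.
    rewrite indicE mem_set ?ltr01 // => i.
    by rewrite !(tnth_nth 0); exact: ht.
have CxN : forall e, Ev e -> C x None e.
  move=> e He [i|] /=; last exact: lexx.
  by have /andP[h _] := He i; move: h; rewrite /a tnth_mktuple.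
have sEv : Ev `<=` CL.
  move=> e He; rewrite /CL -bigcup_seq; exists None; last exact: CxN.
  by rewrite /= mem_filter /= lexx mem_index_enum.
have sCL' : CL' `<=` CL `\` Ev.
  move=> e; rewrite /CL' -bigcup_seq => -[l /= lr He].
  move: lr; rewrite mem_filter => /andP[lL _].
  split.
    have [a0 Ha] := argmax x e.
    case: (boolP (x' a0 <= x a0)) => ha.
      rewrite /CL -bigcup_seq; exists a0 => //.
      by rewrite /= mem_filter ha mem_index_enum.
    exfalso; move: ha; rewrite -ltNge => ha.
    have := He a0; rewrite leNgt; apply/negP.
    rewrite negbK; apply: (@le_lt_trans _ _ (U e l (x l))); first by rewrite Ule.
    apply: le_lt_trans (Ha l) _; by rewrite Ult.
  move=> hE.
  have := He (Some k0); rewrite leNgt; apply/negP.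
  rewrite negbK; apply: (@le_lt_trans _ _ (U e None 0)).
    apply: (@le_trans _ _ (U e l (x l))); first by rewrite Ule.
    exact: CxN.
  have /andP[_ h2] := hE k0.
  by move: h2; rewrite /b tnth_mktuple eqxx.
have H1 : P CL = (P (CL `\` Ev) + P (CL `&` Ev))%E := measureDI P mCL mEv.
rewrite setIidr // in H1.
have H2 : (P CL' <= P (CL `\` Ev))%E.
  by apply: le_measure => //; rewrite inE //; apply: measurableD.
have : (P (CL `\` Ev) < P CL)%E.
  by rewrite H1 lteDl // fin_num_measure //; apply: measurableD.
by rewrite eqCL ltNge H2.
Qed.

Lemma main_sec : exists! delta : 'I_n -> R, sigma_tilde_inv P U s delta.
Proof.
have [ds hds] := exist_sol.
have hds' : forall k, P (C (extend0 ds) k) = (s k)%:E.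
  by move=> k; rewrite -hds; exact: PC_fin.
exists ds; split; first exact: hds'.
move=> d' hd'.
have heq : forall k, P (C (extend0 ds) k) = P (C (extend0 d') k).
  by move=> k; exact: (etrans (hds' k) (esym (hd' k))).
apply/funext => i; case: (ltgtP (ds i) (d' i)) => // h; exfalso.
  exact: (uniq_aux heq h).
by apply: (uniq_aux (delta := d') (delta' := ds)) h => k; rewrite heq.
Qed.

End Main.

End Aux.
Import Aux.

Theorem theorem4 (R : realType) (d : measure_display) (Omega : measurableType d)
  (P : probability Omega R) (n : nat) (U : Omega -> option 'I_n -> R -> R)
  (* regularity *)
  (Umeas : forall (j : option 'I_n) (delta : R),
      measurable_fun [set: Omega] (fun e => U e j delta))
  (Uincr : forall e j, {homo U e j : x y / x < y})
  (Ucont : forall e j, continuous (U e j))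
  (* no indifference *)
  (Unoind : forall (j j' : option 'I_n), j <> j' -> forall delta delta' : R,
      P [set e | U e j delta = U e j' delta'] = 0%E)
  (* (i) invertibility *)
  (Uinv : forall e (j : 'I_n), bijective (U e (Some j)))
  (* (ii) Z0_j = U_{e j}^{-1}(U_{e 0}(0)) has a non-vanishing density *)
  (Z0 : Omega -> n.-tuple R)
  (HZ0 : forall e (j : 'I_n), U e (Some j) (tnth (Z0 e) j) = U e None 0)
  (f : n.-tuple R -> R)
  (fmeas : measurable_fun [set: n.-tuple R] f)
  (fpos : forall z, 0 < f z)
  (fdens : forall A : set (n.-tuple R), measurable A ->
      P (Z0 @^-1` A) = lebesgue_tuple_integral (fun z => ((f z)%:E * (\1_A z)%:E)%E)) :
  forall s : option 'I_n -> R,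
    (forall k, 0 < s k) -> \sum_(k : option 'I_n) s k = 1 ->
    exists! delta : 'I_n -> R, sigma_tilde_inv P U s delta.
Proof.
Proof.
move=> s hs hsum.
exact: (main_sec Umeas Uincr Ucont Unoind Uinv hs hsum HZ0 fmeas fpos fdens).
Qed.
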